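(* Let $G$ be a finite EPPO group. Then $\mathcal{S}(G)$ is cyclically separable if and only if either $pq$ divides $|G|$ for some primes $p > q \geq 5$, or at least two of the following three conditions hold: (i) $p$ divides $|G|$ for some prime $p \geq 5$; (ii) $3$ divides $|G|$ and $G$ has a Sylow $3$-subgroup which is not of order $3$ or is not normal in $G$; (iii) $2$ divides $|G|$ and $G$ has a Sylow $2$-subgroup which is not of order $2$ or is not normal in $G$.
   Context: A finite group is an EPPO group if every element has prime power order. All graphs are simple and undirected. For a finite group $G$, the order supergraph $\mathcal{S}(G)$ is the graph with vertex set $G$ in which two distinct vertices $x,y$ are adjacent if and only if the order of $x$ divides the order of $y$ or the order of $y$ divides the order of $x$. For a graph $\Gamma$, a vertex cutset is a set $S$ of vertices such that $\Gamma - S$ is disconnected; a cyclic vertex cutset is a vertex cutset $S$ such that $\Gamma - S$ has at least two connected components each of which contains a cycle. $\Gamma$ is called cyclically separable if it has a cyclic vertex cutset. *)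

(* Defs.v *)
From mathcomp Require Import all_boot all_fingroup all_solvable.
Set Implicit Arguments. Unset Strict Implicit. Unset Printing Implicit Defensive.
Local Open Scope group_scope.

Definition eppo (gT : finGroupType) (G : {group gT}) : Prop :=
  forall x, x \in G -> exists p k, prime p /\ #[x] = (p ^ k)%N.

(* Simple graphs: vertex set V : {set T} with a symmetric irreflexive
   adjacency relation e. *)

Definition restr (T : finType) (W : {set T}) (e : rel T) : rel T :=
  [rel x y | [&& x \in W, y \in W & e x y]].

Definition comp_has_cycle (T : finType) (W : {set T}) (e : rel T) (x : T) :
  Prop :=
  exists c : seq T, [/\ (3 <= size c)%N, uniq c, path.cycle (restr W e) c &
                        connect (restr W e) x (head x c)].

(* S is a cyclic vertex cutset of the graph (V, e): deleting S leaves at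
   least two connected components each containing a cycle (in particular
   the remaining graph is disconnected, so S is a vertex cutset). *)
Definition cyclic_vertex_cutset (T : finType) (V : {set T}) (e : rel T)
  (S : {set T}) : Prop :=
  S \subset V /\
  exists x y, [/\ x \in V :\: S, y \in V :\: S,
                  ~~ connect (restr (V :\: S) e) x y,
                  comp_has_cycle (V :\: S) e x &
                  comp_has_cycle (V :\: S) e y].

Definition cyclically_separable (T : finType) (V : {set T}) (e : rel T) :
  Prop := exists S : {set T}, cyclic_vertex_cutset V e S.

Definition order_super_rel (gT : finGroupType) : rel gT :=
  [rel x y | (x != y) && ((#[x] %| #[y])%N || (#[y] %| #[x])%N)].

Definition order_supergraph_cyclically_separable (gT : finGroupType)
  (G : {group gT}) : Prop :=
  cyclically_separable (G : {set gT}) (@order_super_rel gT).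

(* Main.v *)
Require Import Defs.
From mathcomp Require Import all_boot all_fingroup all_solvable zify.
Set Implicit Arguments. Unset Strict Implicit. Unset Printing Implicit Defensive.
Local Open Scope group_scope.

Definition pset (gT : finGroupType) (G : {group gT}) (p : nat) : {set gT} :=
  [set x in G | (x != 1) && p.-elt x].

Lemma pelt_pow (gT : finGroupType) (p : nat) (x : gT) :
  p.-elt x -> x != 1 -> exists k, #[x] = (p ^ k.+1)%N.
Proof.
case/p_natP=> [[|k] hk] nx1; last by exists k.
by move: nx1; rewrite -order_eq1 hk.
Qed.

Lemma adj_pset (gT : finGroupType) (G : {group gT}) p a b :
  a \in pset G p -> b \in pset G p -> a != b -> order_super_rel a b.
Proof.
rewrite !inE => /and3P[_ a1 pa] /and3P[_ b1 pb] ab.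
have [i hi] := pelt_pow pa a1; have [j hj] := pelt_pow pb b1.
rewrite /order_super_rel /= ab /= hi hj; case: (leqP i j) => h.
  by rewrite dvdn_exp2l.
by rewrite orbC dvdn_exp2l // ltnW.
Qed.

Lemma step_pset (gT : finGroupType) (G : {group gT}) p a b :
  eppo G -> prime p -> a \in pset G p -> b \in G -> b != 1 ->
  order_super_rel a b -> b \in pset G p.
Proof.
move=> eG pp aP bG b1 /andP[_ hd].
rewrite inE bG b1 /=.
move: aP; rewrite inE => /and3P[_ a1 pa].
have [i hi] := pelt_pow pa a1.
case/orP: hd => hd; last by apply: pnat_dvd hd pa.
have [r [m [pr hm]]] := eG b bG.
have : (p %| r ^ m)%N.
  by rewrite -hm; apply: dvdn_trans hd; rewrite hi dvdn_exp.
rewrite Euclid_dvdX // dvdn_prime2 // => /andP[/eqP -> _].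
by rewrite /p_elt hm pnatX pnat_id.
Qed.

Lemma path_pset (gT : finGroupType) (G : {group gT}) p (W : {set gT}) :
  eppo G -> prime p -> W \subset G -> 1 \notin W ->
  forall s a, a \in pset G p -> path (restr W (@order_super_rel gT)) a s ->
  all (mem (pset G p)) s.
Proof.
move=> eG pp WG W1; elim=> [|b s IH] a aP //= /andP[/and3P[_ bW e] ps].
have bP : b \in pset G p.
  apply: step_pset eG pp aP _ _ e; first exact: (subsetP WG).
  by apply/eqP=> b1; move: W1; rewrite -b1 bW.
by rewrite bP (IH b).
Qed.

Lemma connect_pset (gT : finGroupType) (G : {group gT}) p (W : {set gT}) x z :
  eppo G -> prime p -> W \subset G -> 1 \notin W -> x \in pset G p ->
  connect (restr W (@order_super_rel gT)) x z -> z \in pset G p.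
Proof.
move=> eG pp WG W1 xP /connectP[s ps ->].
have := path_pset eG pp WG W1 xP ps.
have : last x s \in x :: s by apply: mem_last.
rewrite inE => /orP[/eqP -> //|ls /allP]; exact.
Qed.

Lemma cycle_pset (gT : finGroupType) (G : {group gT}) p (W : {set gT}) x :
  eppo G -> prime p -> W \subset G -> 1 \notin W -> x \in pset G p ->
  comp_has_cycle W (@order_super_rel gT) x -> (3 <= #|pset G p|)%N.
Proof.
move=> eG pp WG W1 xP [[|h t] [c3 uc cyc cx]] //.
have hP := connect_pset eG pp WG W1 xP cx.
have := path_pset eG pp WG W1 hP cyc.
rewrite all_rcons => /andP[_ /allP tP].
have sub : {subset h :: t <= pset G p}.
  by move=> z; rewrite inE => /orP[/eqP -> //|]; apply: tP.
apply: leq_trans c3 _; rewrite -(card_uniqP uc).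
by apply: subset_leq_card; apply/subsetP.
Qed.

Lemma elt_pset (gT : finGroupType) (G : {group gT}) x :
  eppo G -> x \in G -> x != 1 -> exists2 p, prime p & x \in pset G p.
Proof.
move=> eG xG x1; have [p [k [pp hk]]] := eG x xG.
exists p => //; rewrite inE xG x1 /= /p_elt hk pnatX pnat_id //.
Qed.

Lemma pset_disj (gT : finGroupType) (G : {group gT}) p q y :
  p != q -> y \in pset G p -> y \in pset G q -> False.
Proof.
move=> pq; rewrite !inE => /and3P[_ y1 py] /and3P[_ _ qy].
have : (1 < #[y])%N.
  by rewrite ltn_neqAle eq_sym order_eq1 y1 order_gt0.
rewrite -pi_pdiv => hpi.
have := pnatPpi py hpi; have := pnatPpi qy hpi.
by rewrite !inE => /eqP -> /eqP h; rewrite h eqxx in pq.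
Qed.

Lemma forward_graph (gT : finGroupType) (G : {group gT}) :
  eppo G -> order_supergraph_cyclically_separable G ->
  exists p q, [/\ p != q, prime p, prime q, (3 <= #|pset G p|)%N &
                  (3 <= #|pset G q|)%N].
Proof.
move=> eG [S [SG [x [y [xW yW nc cx cy]]]]].
set W := (G : {set gT}) :\: S in xW yW nc cx cy.
set e := @order_super_rel gT in nc cx cy.
have WG : W \subset G by apply: subsetDl.
have S1 : 1 \in S.
  apply/negPn/negP=> S1; have W1 : 1 \in W by rewrite inE S1 group1.
  have c1 z : z \in W -> connect (restr W e) z 1 /\ connect (restr W e) 1 z.
    move=> zW; have [->|z1] := eqVneq z 1; first by rewrite connect0.
    split; apply: connect1; rewrite /restr /= zW W1 /e /order_super_rel /= ?z1 ?(eq_sym 1) ?z1 /= order1 ?dvd1n ?orbT //.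

  case/negP: nc; apply: connect_trans (proj1 (c1 x xW)) (proj2 (c1 y yW)).
have W1 : 1 \notin W by rewrite inE S1.
have ne1 z : z \in W -> z != 1 by move=> zW; apply: contraNneq W1 => <-.
have [p pp xP] := elt_pset eG (subsetP WG x xW) (ne1 x xW).
have [q pq yP] := elt_pset eG (subsetP WG y yW) (ne1 y yW).
exists p, q; split => //.
- have xy : x != y by apply: contraNneq nc => ->; rewrite connect0.
  apply/eqP=> epq; subst q; case/negP: nc; apply: connect1.
  by rewrite /restr /= xW yW; apply: adj_pset xP yP _.
- exact: cycle_pset eG pp WG W1 xP cx.
- exact: cycle_pset eG pq WG W1 yP cy.
Qed.

Lemma triple (T : finType) (A : {set T}) :
  (3 <= #|A|)%N -> exists a b c,
    [/\ a \in A, b \in A, c \in A & [/\ a != b, b != c & a != c]].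
Proof.
rewrite cardE; have := enum_uniq (pred_of_set A).
have mA := mem_enum (pred_of_set A).
case E: (enum _) mA => [|a [|b [|c s]]] mA //= + _.
rewrite !inE !negb_or => /and4P[/and3P[ab ac _] /andP[bc _] _ _].
exists a, b, c; split; rewrite -?mA ?inE ?eqxx ?orbT //.
Qed.

Lemma cyc3 (gT : finGroupType) (G : {group gT}) p x :
  x \in pset G p -> (3 <= #|pset G p|)%N ->
  comp_has_cycle (G :\: [set 1]) (@order_super_rel gT) x.
Proof.
move=> xP /triple[a [b [c [aP bP cP [ab bc ac]]]]].
have inW z : z \in pset G p -> z \in G :\: [set 1].
  by rewrite !inE => /and3P[-> -> _].
exists [:: a; b; c]; split => //.
- by rewrite /= !inE negb_or ab ac bc.
- rewrite /= /restr /= !inW // (adj_pset aP bP) // (adj_pset bP cP) // (adj_pset cP aP) //.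
  by rewrite eq_sym.
- apply: connect_trans (_ : connect _ x a) _; last exact: connect0.
  have [->|xa] := eqVneq x a; first exact: connect0.
  by apply: connect1; rewrite /restr /= !inW // (adj_pset xP aP).
Qed.

Lemma backward_graph (gT : finGroupType) (G : {group gT}) p q :
  eppo G -> p != q -> prime p -> prime q ->
  (3 <= #|pset G p|)%N -> (3 <= #|pset G q|)%N ->
  order_supergraph_cyclically_separable G.
Proof.
move=> eG pq pp pq' hp hq.
have [x [_ [_ [xP _ _ _]]]] := triple hp.
have [y [_ [_ [yP _ _ _]]]] := triple hq.
have inW z r : z \in pset G r -> z \in G :\: [set 1].
  by rewrite !inE => /and3P[-> -> _].
exists [set 1]; split; first by rewrite sub1set group1.
exists x, y; split.
- exact: inW xP.
- exact: inW yP.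
- apply/negP=> /(connect_pset eG pp (subsetDl _ _) _ xP) h.
  by apply: (pset_disj pq (h _) yP); rewrite !inE eqxx.
- exact: cyc3 xP hp.
- exact: cyc3 yP hq.
Qed.
Definition csyl (gT : finGroupType) (G : {group gT}) (p : nat) : Prop :=
  (p %| #|G|)%N /\ exists P : {group gT}, P \in 'Syl_p(G) /\
                                     (#|P| != p \/ ~~ (P <| G)).

Lemma card3 (T : finType) (A : {set T}) a b c :
  a \in A -> b \in A -> c \in A -> a != b -> b != c -> a != c ->
  (3 <= #|A|)%N.
Proof.
move=> aA bA cA ab bc ac.
have u : uniq [:: a; b; c] by rewrite /= !inE negb_or ab ac bc.
rewrite -[3%N]/(size [:: a; b; c]) -(card_uniqP u).
apply: subset_leq_card; apply/subsetP => z; rewrite !inE.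
by case/or3P=> /eqP ->.
Qed.

Lemma big_sub (gT : finGroupType) (G : {group gT}) (p : nat) (B : {set gT}) :
  B \subset G -> (forall z, z \in B -> p.-elt z) -> (4 <= #|B|)%N ->
  (3 <= #|pset G p|)%N.
Proof.
move=> BG Bp B4.
have : (3 <= #|B :\ 1%g|)%N.
  move: B4; rewrite (cardsD1 (1%g : gT) B).
  case: (1%g \in B) => /= h.
    by rewrite add1n ltnS in h.
  by apply: ltnW.
move/leq_trans; apply; apply: subset_leq_card; apply/subsetP=> z.
rewrite !inE => /andP[z1 zB]; rewrite (subsetP BG) // z1 /=; exact: Bp.
Qed.

Lemma pset_dvd (gT : finGroupType) (G : {group gT}) p :
  (3 <= #|pset G p|)%N -> (p %| #|G|)%N.
Proof.
case/triple=> a [_ [_ [+ _ _ _]]]; rewrite inE => /and3P[aG a1 pa].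
have [k hk] := pelt_pow pa a1.
apply: dvdn_trans (order_dvdG aG); rewrite hk; exact: dvdn_exp.
Qed.

Lemma fwd_syl (gT : finGroupType) (G : {group gT}) p :
  prime p -> (p <= 3)%N -> (3 <= #|pset G p|)%N -> csyl G p.
Proof.
move=> pp p3 h3; split; first exact: pset_dvd h3.
have [P sP] := Sylow_exists p G; exists P; rewrite inE; split=> //.
case: (boolP (#|P| == p)) => hP; last by left.
case: (boolP (P <| G)) => nP; last by right.
exfalso; suff : (#|pset G p| <= #|P :\ 1%g|)%N.
  move=> h; have := leq_trans h3 h; move: hP.
  rewrite (cardsD1 (1%g : gT) P) group1 add1n => /eqP hP.
  by rewrite -hP in p3; case: #|P^#| p3 => [|[|[|]]].
apply: subset_leq_card; apply/subsetP=> z; rewrite !inE => /and3P[zG z1 pz].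
by rewrite z1 (mem_normal_Hall sP nP zG).
Qed.

Lemma inv3 (gT : finGroupType) (G : {group gT}) (a b : gT) :
  a \in G -> b \in G -> a != 1 -> b != 1 -> a != b ->
  a ^+ 2 = 1 -> b ^+ 2 = 1 -> (3 <= #|pset G 2|)%N.
Proof.
move=> aG bG a1 b1 ab a2 b2.
have p2 z : z ^+ 2 = 1 -> 2.-elt z.
  by move=> hz; apply: pnat_dvd (pnat_id (isT : prime 2)); rewrite order_dvdn hz.
have bi : b^-1 = b by apply/eqP; rewrite eq_invg_mul -expg2 b2.
have ai : a^-1 = a by apply/eqP; rewrite eq_invg_mul -expg2 a2.
have aP : a \in pset G 2 by rewrite inE aG a1 p2.
have bP : b \in pset G 2 by rewrite inE bG b1 p2.
have [ca|ca] := eqVneq (a ^ b) a.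
  have cab : commute a b by apply/commgP; apply/conjg_fixP.
  have dP : a * b \in pset G 2.
    rewrite inE groupM // p2 ?andbT; last by rewrite expgMn // a2 b2 mulg1.
    rewrite /=; apply/eqP=> h; case/eqP: ab.
    by rewrite -[a]ai; apply/eqP; rewrite eq_invg_mul h.
  apply: (card3 aP bP dP) => //.
    apply/eqP=> h; case/eqP: a1.
    by apply: (mulIg b); rewrite mul1g -h.
  apply/eqP=> h; case/eqP: b1.
  by apply: (mulgI a); rewrite mulg1 -h.
have cP : a ^ b \in pset G 2.
  by rewrite inE groupJ // conjg_eq1 a1 /= /p_elt orderJ; apply: p2.
apply: (card3 aP bP cP) => //; last by rewrite eq_sym.
apply/eqP=> h; case/eqP: ab; apply: (conjg_inj b).
by rewrite -h conjgE mulKg.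
Qed.

Lemma bwd_big (gT : finGroupType) (G : {group gT}) p :
  prime p -> (5 <= p)%N -> (p %| #|G|)%N -> (3 <= #|pset G p|)%N.
Proof.
move=> pp p5 pG; have [a aG oa] := Cauchy pp pG.
apply: (@big_sub _ _ p <[a]>).
- by rewrite cycle_subG.
- move=> z za; apply: mem_p_elt za.
  by rewrite /pgroup -/(#[a]) oa pnat_id.
- by rewrite -/(#[a]) oa; apply: leq_trans p5.
Qed.

Lemma bwd_syl (gT : finGroupType) (G : {group gT}) p :
  prime p -> (p <= 3)%N -> csyl G p -> (3 <= #|pset G p|)%N.
Proof.
move=> pp p3 [pG [P [+ hP]]]; rewrite inE => sP.
have PG := pHall_sub sP; have pP := pHall_pgroup sP.
have P1 : (1 < #|P|)%N.
  rewrite (card_Hall sP) p_part_gt1 mem_primes pp cardG_gt0 pG //.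
case: (boolP (#|P| == p)) => eP; last first.
  apply: (big_sub PG (fun z => mem_p_elt pP)).
  move: eP P1; rewrite (card_pgroup pP); case: (logn p #|P|) => [|[|k]] //=.
    by rewrite expn1 eqxx.
  move=> _ _; apply: leq_trans (_ : p ^ 2 <= _)%N.
    by rewrite expnS expn1; exact: (leq_mul (prime_gt1 pp) (prime_gt1 pp)).
  by apply: leq_pexp2l; [apply: prime_gt0 | ].
case: hP => [|nP]; first by rewrite eP.
move: nP; rewrite /normal PG /= => /subsetPn[g gG]; rewrite inE => nPg.
have PgG : P :^ g \subset G by rewrite -(conjGid gG) conjSg.
have [p3'|p2] : p = 3 \/ p = 2.
  by case: p pp p3 {pG sP eP nPg PgG pP P1} => [|[|[|[|]]]]; auto.
- subst p; apply: (@big_sub _ _ 3 (P :|: P :^ g)).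
  + by rewrite subUset PG.
  + move=> z; rewrite inE => /orP[zP|zP]; first exact: mem_p_elt pP zP.
    by apply: mem_p_elt zP; rewrite pgroupJ.
  + by rewrite -(eqP eP); apply: proper_card; apply: properUl.
- subst p.
  have : (0 < #|P :\ 1%g|)%N.
    by move: (eP); rewrite (cardsD1 (1%g : gT) P) group1 add1n => /eqP[->].
  rewrite card_gt0 => /set0Pn[a]; rewrite !inE => /andP[a1 aP].
  case/subsetPn: nPg => b bPg bP.
  have b1 : b != 1 by apply: contraNneq bP => ->; rewrite group1.
  have ab : a != b by apply: contraNneq bP => <-.
  apply: (inv3 (subsetP PG a aP) (subsetP PgG b bPg) a1 b1 ab).
    by apply/eqP; rewrite -order_dvdn -(eqP eP); apply: order_dvdG.
  apply/eqP; rewrite -order_dvdn -(eqP eP) -(cardJg P g).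
  exact: (@order_dvdG _ (P :^ g)%G).
Qed.

Lemma classify (gT : finGroupType) (G : {group gT}) p :
  prime p -> (3 <= #|pset G p|)%N ->
  (p %| #|G|)%N /\ [\/ (5 <= p)%N, p = 3 /\ csyl G 3 | p = 2 /\ csyl G 2].
Proof.
move=> pp h3; split; first exact: pset_dvd h3.
case: (leqP 5 p) => [|p5]; first by constructor 1.
have p3 : (p <= 3)%N.
  by move: p5 pp; clear; case: p => [|[|[|[|[|]]]]].
have := fwd_syl pp p3 h3.
have [e|e] : p = 3 \/ p = 2.
  by move: p3 pp; clear; case: p => [|[|[|[|]]]]; auto.
all: rewrite e.
- by move=> h; constructor 2.
- by move=> h; constructor 3.
Qed.

Lemma dvd_pq p q n : prime p -> prime q -> p != q -> (p %| n)%N -> (q %| n)%N ->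
  (p * q %| n)%N.
Proof.
move=> pp pq ne hp hq; rewrite Gauss_dvd ?hp ?hq //.
by rewrite prime_coprime // dvdn_prime2 // ne.
Qed.

Theorem mainTheorem3 (gT : finGroupType) (G : {group gT}) :
  eppo G ->
  (order_supergraph_cyclically_separable G <->
   (exists p q : nat, [/\ prime p, prime q, (5 <= q)%N, (q < p)%N &
                          (p * q %| #|G|)%N]) \/
   (let c1 := exists p : nat, [/\ prime p, (5 <= p)%N & (p %| #|G|)%N] in
    let c2 := (3 %| #|G|)%N /\
              exists P : {group gT}, P \in 'Syl_3(G) /\
                                     (#|P| != 3%N \/ ~~ (P <| G)) in
    let c3 := (2 %| #|G|)%N /\
              exists P : {group gT}, P \in 'Syl_2(G) /\
                                     (#|P| != 2%N \/ ~~ (P <| G)) in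
    (c1 /\ c2) \/ (c1 /\ c3) \/ (c2 /\ c3))).
Proof.
move=> eG; rewrite -/(csyl G 3) -/(csyl G 2) /=; split.
  case/(forward_graph eG) => p [q [pq pp pq' hp hq]].
  have [pG cp] := classify pp hp; have [qG cq] := classify pq' hq.
  case: cp => [p5|[e3 c3]|[e2 c2]]; case: cq => [q5|[f3 d3]|[f2 d2]];
    try (subst; by rewrite ?eqxx in pq).
  - left; case: (ltngtP p q) => hpq; last by rewrite hpq eqxx in pq.
    + exists q, p; split=> //; apply: dvd_pq => //; by rewrite eq_sym.
    + by exists p, q; split=> //; apply: dvd_pq.
  - by right; left; split=> //; exists p.
  - by right; right; left; split=> //; exists p.
  - by right; left; split=> //; exists q.
  - by right; right; right; split.
  - by right; right; left; split=> //; exists q.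
  - by right; right; right; split.
case=> [[p [q [pp pq q5 qp pqG]]]|[[[r [pr r5 rG]] c3]|[[[r [pr r5 rG]] c2]|[c3 c2]]]].
- apply: (backward_graph (p:=p) (q:=q) eG _ (pp) (pq)).
  + by rewrite neq_ltn qp orbT.
  + apply: bwd_big pp (leq_trans q5 (ltnW qp)) _.
    exact: dvdn_trans (dvdn_mulr _ (dvdnn _)) pqG.
  + apply: bwd_big pq q5 _.
    exact: dvdn_trans (dvdn_mull _ (dvdnn _)) pqG.
- apply: (backward_graph (p:=r) (q:=3) eG _ pr _ (bwd_big pr r5 rG) (bwd_syl _ _ c3)) => //.
  by apply: contraTneq r5 => ->.
- apply: (backward_graph (p:=r) (q:=2) eG _ pr _ (bwd_big pr r5 rG) (bwd_syl _ _ c2)) => //.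
  by apply: contraTneq r5 => ->.
- exact: (backward_graph (p:=3) (q:=2) eG _ _ _ (bwd_syl _ _ c3) (bwd_syl _ _ c2)).
Qed.
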